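(* Fix $\delta\le 1/T$ and, for each context $\mathbf{z}$, a set $\mathcal{E}_{\mathbf{z}}=\mathcal{E}_{\mathbf{z}}(\delta)$ of $\delta$-approximate extreme points. For any sequence of contexts $\mathbf{z}_1,\ldots,\mathbf{z}_T$, any sequence of followers $f_1,\ldots,f_T$ and any leader policy $\pi$, there exists a policy $\pi^{(\mathcal{E})}:\mathcal{Z}\to\bigcup_{\mathbf{z}\in\mathcal{Z}}\mathcal{E}_{\mathbf{z}}$ with $\pi^{(\mathcal{E})}(\mathbf{z})\in\mathcal{E}_{\mathbf{z}}$ for every $\mathbf{z}$, such that $$\sum_{t=1}^T u(\mathbf{z}_t,\pi(\mathbf{z}_t),b_{f_t}(\mathbf{z}_t,\pi(\mathbf{z}_t)))-u(\mathbf{z}_t,\pi^{(\mathcal{E})}(\mathbf{z}_t),b_{f_t}(\mathbf{z}_t,\pi^{(\mathcal{E})}(\mathbf{z}_t)))\le 1.$$ Moreover, the same holds in expectation over any distribution $\mathcal{F}$ over follower types: for any contexts $\mathbf{z}_1,\dots,\mathbf{z}_T$ and any policy $\pi$ there is such a $\pi^{(\mathcal{E})}$ with $\sum_{t=1}^T\mathbb{E}_{f_t\sim\mathcal{F}}[u(\mathbf{z}_t,\pi(\mathbf{z}_t),b_{f_t}(\mathbf{z}_t,\pi(\mathbf{z}_t)))-u(\mathbf{z}_t,\pi^{(\mathcal{E})}(\mathbf{z}_t),b_{f_t}(\mathbf{z}_t,\pi^{(\mathcal{E})}(\mathbf{z}_t)))]\le 1$.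
   Context: Finite leader action set $\mathcal{A}$, finite follower action set $\mathcal{A}_f$, context space $\mathcal{Z}\subseteq\mathbb{R}^d$, follower types $\alpha^{(1)},\ldots,\alpha^{(K)}$ with utilities $u_{\alpha^{(i)}}:\mathcal{Z}\times\mathcal{A}\times\mathcal{A}_f\to[0,1]$, leader utility $u:\mathcal{Z}\times\mathcal{A}\times\mathcal{A}_f\to[0,1]$, mixed strategies $\mathbf{x}\in\mathcal{X}=\Delta(\mathcal{A})$, $u(\mathbf{z},\mathbf{x},a_f)=\sum_{a_l}\mathbf{x}[a_l]u(\mathbf{z},a_l,a_f)$. Best response: $b_f(\mathbf{z},\mathbf{x})\in\arg\max_{a_f}\sum_{a_l}\mathbf{x}[a_l]u_f(\mathbf{z},a_l,a_f)$, ties broken by a fixed known ordering over $\mathcal{A}_f$. A policy is a map $\mathcal{Z}\to\mathcal{X}$. For a type $\alpha^{(i)}$, action $a_f$ and context $\mathbf{z}$, $\mathcal{X}_{\mathbf{z}}(\alpha^{(i)},a_f)=\{\mathbf{x}\in\mathcal{X}:b_{\alpha^{(i)}}(\mathbf{z},\mathbf{x})=a_f\}$; for a function $\sigma:\{\alpha^{(1)},\ldots,\alpha^{(K)}\}\to\mathcal{A}_f$, the contextual best-response region is $\mathcal{X}_{\mathbf{z}}(\sigma)=\bigcap_{i\in[K]}\mathcal{X}_{\mathbf{z}}(\alpha^{(i)},\sigma(\alpha^{(i)}))$. $\delta$-approximate extreme points: for $\delta>0$ and context $\mathbf{z}$, $\mathcal{E}_{\mathbf{z}}(\delta)$ is a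 set of mixed strategies such that for every $\sigma$ with $\mathcal{X}_{\mathbf{z}}(\sigma)\neq\emptyset$ and every extreme point $\mathbf{x}$ of the closure $\mathrm{cl}(\mathcal{X}_{\mathbf{z}}(\sigma))$: if $\mathbf{x}\in\mathcal{X}_{\mathbf{z}}(\sigma)$ then $\mathbf{x}\in\mathcal{E}_{\mathbf{z}}(\delta)$; otherwise there is $\mathbf{x}'\in\mathcal{E}_{\mathbf{z}}(\delta)\cap\mathcal{X}_{\mathbf{z}}(\sigma)$ with $\|\mathbf{x}'-\mathbf{x}\|_1\le\delta$. *)

(* Defs.v *)
From HB Require Import structures.
From mathcomp Require Import all_boot all_order all_algebra.
From mathcomp Require Import reals.
Set Implicit Arguments. Unset Strict Implicit. Unset Printing Implicit Defensive.
Import Order.TTheory GRing.Theory Num.Theory.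
Local Open Scope ring_scope.

Section StackelbergDefs.
Variables (R : realType) (A Af : finType) (Zt : Type).

Definition mixed (x : {ffun A -> R}) : Prop :=
  (forall a, 0 <= x a) /\ \sum_a x a = 1.

Definition l1dist (x y : {ffun A -> R}) : R := \sum_a `|x a - y a|.

Definition mutil (v : Zt -> A -> Af -> R) (z : Zt) (x : {ffun A -> R}) (af : Af) : R :=
  \sum_a x a * v z a af.

(* Best response, ties broken by the fixed ordering ordAf (first maximizer in
   ordAf); af0 is only a default, never used when ordAf enumerates Af. *)
Definition best_resp (ordAf : seq Af) (af0 : Af) (uf : Zt -> A -> Af -> R)
    (z : Zt) (x : {ffun A -> R}) : Af :=
  head af0 [seq af <- ordAf | [forall b, mutil uf z x b <= mutil uf z x af]].

Definition br_region (ordAf : seq Af) (af0 : Af) (K : nat)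
    (alpha : 'I_K -> Zt -> A -> Af -> R) (z : Zt) (sigma : 'I_K -> Af)
    (x : {ffun A -> R}) : Prop :=
  mixed x /\ forall i, best_resp ordAf af0 (alpha i) z x = sigma i.

Definition closure_l1 (S : {ffun A -> R} -> Prop) (x : {ffun A -> R}) : Prop :=
  forall e : R, 0 < e -> exists y, S y /\ l1dist x y < e.

Definition extreme_point (S : {ffun A -> R} -> Prop) (x : {ffun A -> R}) : Prop :=
  S x /\ forall (y w : {ffun A -> R}) (l : R), S y -> S w -> 0 < l < 1 ->
    (forall a, x a = l * y a + (1 - l) * w a) -> y = w.

Definition approx_extreme (ordAf : seq Af) (af0 : Af) (K : nat)
    (alpha : 'I_K -> Zt -> A -> Af -> R) (z : Zt) (delta : R)
    (E : {ffun A -> R} -> Prop) : Prop :=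
  (forall x, E x -> mixed x) /\
  forall sigma : 'I_K -> Af,
    (exists x, br_region ordAf af0 alpha z sigma x) ->
    forall x, extreme_point (closure_l1 (br_region ordAf af0 alpha z sigma)) x ->
      (br_region ordAf af0 alpha z sigma x -> E x) /\
      (~ br_region ordAf af0 alpha z sigma x ->
         exists x', E x' /\ br_region ordAf af0 alpha z sigma x' /\ l1dist x' x <= delta).

End StackelbergDefs.

(* Main.v *)
Require Import Defs.
From HB Require Import structures.
From mathcomp Require Import all_boot all_order all_algebra.
From mathcomp Require Import reals.
From mathcomp Require Import ring lra.
From mathcomp Require Import boolp classical_sets topology normedtype matrix_normedtype derive.
Import Order.TTheory GRing.Theory Num.Def Num.Theory.
Import numFieldTopology.Exports numFieldNormedType.Exports.
Local Open Scope ring_scope.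

Section Ana.
Local Open Scope classical_set_scope.
Local Open Scope ring_scope.
Variables (R : realType) (A : finType).

Definition toF (v : 'rV[R]_#|A|) : {ffun A -> R} := [ffun a => v ord0 (enum_rank a)].

Lemma coord_le_norm (v : 'rV[R]_#|A|) j : `|v ord0 j| <= `|v|.
Proof.
have /mapP[k Hk ->] : `|v ord0 j| \in [seq `|v x.1 x.2| | x : 'I_1 * 'I_#|A|].
  by apply/mapP; exists (ord0, j) => //=; rewrite mem_enum.
by rewrite [leRHS]/normr /= mx_normrE; apply/bigmax_geP; right => /=; exists k.
Qed.

Lemma norm_le (v : 'rV[R]_#|A|) M : 0 <= M -> (forall j, `|v ord0 j| <= M) -> `|v| <= M.
Proof.
move=> M0 H; rewrite /normr /= mx_normrE; apply: bigmax_le => // [[i j]] _ /=.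
by rewrite (ord1 i); exact: H.
Qed.

Lemma l1_triangle (x y w : {ffun A -> R}) : l1dist x w <= l1dist x y + l1dist y w.
Proof.
rewrite /l1dist -big_split /=; apply: ler_sum => a _.
by rewrite (_ : x a - w a = (x a - y a) + (y a - w a)) ?ler_normD // addrA subrK.
Qed.

Lemma l1_toF (v w : 'rV[R]_#|A|) : l1dist (toF v) (toF w) <= #|A|%:R * `|v - w|.
Proof.
rewrite /l1dist.
have -> : #|A|%:R * `|v - w| = \sum_(a : A) `|v - w| by rewrite sumr_const mulr_natl.
apply: ler_sum => a _.
by rewrite !ffunE; have := coord_le_norm (v - w) (enum_rank a); rewrite !mxE.
Qed.

Lemma closure_closed (X : {ffun A -> R} -> Prop) :
  closed [set v : 'rV[R]_#|A| | closure_l1 X (toF v)].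
Proof.
move=> v Hv e e0.
set r := e / 2 / (#|A|%:R + 1).
have r0 : 0 < r by rewrite /r !divr_gt0 // ltr_wpDl.
have [w [/= Sw vw]] := Hv (ball v r) (nbhsx_ballx v r r0).
have [y [Xy wy]] := Sw (e / 2) (divr_gt0 e0 (ltr0Sn _ 1)).
exists y; split => //.
apply: le_lt_trans (l1_triangle _ (toF w) _) _.
rewrite [ltRHS](splitr e) ler_ltD //.
apply: le_trans (l1_toF v w) _.
rewrite -ball_normE /= in vw.
have : #|A|%:R * `|v - w| <= #|A|%:R * r by rewrite ler_wpM2l // ltW.
move/le_trans; apply.
rewrite /r mulrCA ler_piMr ?divr_ge0 ?ltW //.
by rewrite ltr_pdivrMr ?ltr_wpDl // mul1r ltrDl.
Qed.


Definition toV (x : {ffun A -> R}) : 'rV[R]_#|A| := \row_j x (enum_val j).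
Lemma toFK x : toF (toV x) = x.
Proof. by apply/ffunP => a; rewrite !ffunE mxE enum_rankK. Qed.

Lemma mixed_le1 (x : {ffun A -> R}) a : mixed x -> x a <= 1.
Proof.
move=> [x0 x1]; rewrite -x1 (bigD1 a) //= lerDl sumr_ge0 // => b _; exact: x0.
Qed.

Lemma coord_le_l1 (x y : {ffun A -> R}) a : `|x a - y a| <= l1dist x y.
Proof. by rewrite /l1dist (bigD1 a) //= lerDl sumr_ge0. Qed.

Lemma closure_bounded (X : {ffun A -> R} -> Prop) : (forall x, X x -> mixed x) ->
  bounded_set ([set v : 'rV[R]_#|A| | closure_l1 X (toF v)]%classic).
Proof.
move=> Xm; exists 2; split => // M HM v Sv /=.
apply: norm_le => [|j]; first by apply: le_trans (ltW HM).
have [y [Xy vy]] := Sv 1 ltr01.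
have -> : v ord0 j = toF v (enum_val j) by rewrite ffunE enum_valK.
have h1 := coord_le_l1 (toF v) y (enum_val j).
have h2 := @mixed_le1 y (enum_val j) (Xm _ Xy).
have h3 := (Xm _ Xy).1 (enum_val j).
apply: le_trans (ltW HM).
rewrite -[toF v _](subrK (y (enum_val j))).
apply: le_trans (ler_normD _ _) _.
rewrite (ger0_norm h3); rewrite [2]/(1 + 1) lerD //.
exact: le_trans h1 (ltW vy).
Qed.

Lemma lin_cont (g : A -> R) :
  continuous (fun v : 'rV[R]_#|A| => \sum_a v ord0 (enum_rank a) * g a).
Proof.
apply: continuous_big; [exact: add_continuous|] => a _ x.
by apply: continuousM; [exact: coord_continuous | exact: cst_continuous].
Qed.

Lemma sq_cont :
  continuous (fun v : 'rV[R]_#|A| => \sum_a v ord0 (enum_rank a) * v ord0 (enum_rank a)).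
Proof.
apply: continuous_big; [exact: add_continuous|] => a _ x.
by apply: continuousM; exact: coord_continuous.
Qed.

Lemma mul_self_ge0 (x : R) : 0 <= x * x.
Proof. by rewrite -expr2 sqr_ge0. Qed.

Lemma exists_ext (X : {ffun A -> R} -> Prop) (p : {ffun A -> R}) (g : A -> R) :
  (forall x, X x -> mixed x) -> X p ->
  exists xs, extreme_point (closure_l1 X) xs /\ \sum_a p a * g a <= \sum_a xs a * g a.
Proof.
move=> Xm Xp.
pose S := [set v : 'rV[R]_#|A| | closure_l1 X (toF v)].
have Scl : closed S by exact: closure_closed.
have Sc : compact S := bounded_closed_compact (@closure_bounded X Xm) Scl.
pose G := fun v : 'rV[R]_#|A| => \sum_a v ord0 (enum_rank a) * g a.
pose H := fun v : 'rV[R]_#|A| => \sum_a v ord0 (enum_rank a) * v ord0 (enum_rank a).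
have GE v : G v = \sum_a toF v a * g a by apply: eq_bigr => a _; rewrite ffunE.
have HE v : H v = \sum_a toF v a * toF v a by apply: eq_bigr => a _; rewrite ffunE.
have Sv0 : S (toV p).
  by move=> e e0; exists p; split => //; rewrite toFK /l1dist big1 // => a _; rewrite subrr normr0.
have [c1 Sc1 Hc1] := @compact_EVT_max _ _ G S (ex_intro _ _ Sv0) Sc
   (continuous_subspaceT (lin_cont g)).
pose S2 := S `&` (G @^-1` [set G c1]).
have S2cl : closed S2.
  apply: closedI => //; apply: preimage_closed; last exact: closed_eq.
  by move=> v _; exact: lin_cont.
have S2c : compact S2 by apply: subclosed_compact S2cl Sc _; exact: subIsetl.
have S2c1 : S2 c1 by split => //; rewrite inE in Sc1.
have [c2 Sc2 Hc2] := @compact_EVT_max _ _ H S2 (ex_intro _ _ S2c1) S2c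
   (continuous_subspaceT sq_cont).
rewrite inE in Sc2; case: Sc2 => Sc2 /= Gc2.
exists (toF c2); split; last first.
  rewrite -GE Gc2; have := Hc1 (toV p); rewrite inE => /(_ Sv0).
  by rewrite GE toFK.
split => // y w l Cy Cw /andP[l0 l1] Hx.
have Sy : S (toV y) by rewrite /S /= toFK.
have Sw : S (toV w) by rewrite /S /= toFK.
have Gy := Hc1 (toV y); rewrite inE in Gy; have {}Gy := Gy Sy.
have Gw := Hc1 (toV w); rewrite inE in Gw; have {}Gw := Gw Sw.
rewrite [X in X <= _]GE toFK in Gy; rewrite [X in X <= _]GE toFK in Gw.
have Glin : \sum_a toF c2 a * g a = l * \sum_a y a * g a + (1 - l) * \sum_a w a * g a.
  rewrite !mulr_sumr -big_split; apply: eq_bigr => a _; rewrite Hx /=; ring.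
rewrite -GE Gc2 in Glin.
have Gyeq : G (toV y) = G c1 by rewrite [LHS]GE toFK; apply/eqP; rewrite eq_le Gy /=; nra.
have Gweq : G (toV w) = G c1 by rewrite [LHS]GE toFK; apply/eqP; rewrite eq_le Gw /=; nra.
have Hy := Hc2 (toV y); rewrite inE in Hy; have {}Hy := Hy (conj Sy Gyeq).
have Hw := Hc2 (toV w); rewrite inE in Hw; have {}Hw := Hw (conj Sw Gweq).
rewrite !HE !toFK in Hy Hw.
have E : l * \sum_a y a * y a + (1 - l) * \sum_a w a * w a - \sum_a toF c2 a * toF c2 a
   = \sum_a (l * (1 - l)) * ((y a - w a) * (y a - w a)).
  rewrite !mulr_sumr -big_split -sumrB /=; apply: eq_bigr => a _; rewrite Hx; ring.
have k0 : 0 < l * (1 - l) by rewrite mulr_gt0 // subr_gt0.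
have D0 : \sum_a (l * (1 - l)) * ((y a - w a) * (y a - w a)) = 0.
  apply/eqP; rewrite eq_le; apply/andP; split; last first.
    by apply: sumr_ge0 => a _; apply: mulr_ge0; [exact: ltW | exact: mul_self_ge0].
  by rewrite -E; nra.
apply/ffunP => a.
have := psumr_eq0P (fun a _ => mulr_ge0 (ltW k0) (mul_self_ge0 (y a - w a))) D0.
move=> /(_ a isT).
by move/eqP; rewrite mulf_eq0 gt_eqF //= mulf_eq0 orbb subr_eq0 => /eqP.
Qed.

End Ana.


Section Comb.
Local Open Scope ring_scope.
Variable R : realType.

Lemma group_sum (Zt : eqType) T (zs : 'I_T -> Zt) (D : 'I_T -> R) :
  (forall s, \sum_(t | zs t == zs s) D t <= 0) -> \sum_t D t <= 0.
Proof.
move=> H.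
pose h t : option 'I_T := [pick s | zs s == zs t].
have hE t t0 : (h t == h t0) = (zs t == zs t0).
  apply/eqP/eqP => [|e]; last by rewrite /h e.
  rewrite /h; case: pickP => [s /eqP es|/(_ t)]; last by rewrite eqxx.
  case: pickP => [s' /eqP es' [] e|/(_ t0)]; last by rewrite eqxx.
  by rewrite -es -es' e.
rewrite (partition_big h xpredT) //=.
apply: sumr_le0 => j _.
case: (pickP [pred t | h t == j]) => [t0 /= /eqP ht0|none].
  by rewrite -ht0 (eq_bigl (fun t => zs t == zs t0)) ?H // => t; rewrite hE.
by rewrite big_pred0 // => t; have := none t.
Qed.

Lemma core (A Af : finType) (Zt : Type) (ordAf : seq Af) (af0 : Af) (K : nat)
    (alpha : 'I_K -> Zt -> A -> Af -> R) (z : Zt) (delta : R)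
    (Ez : {ffun A -> R} -> Prop) (p : {ffun A -> R}) (g : A -> R) :
  0 <= delta -> approx_extreme ordAf af0 alpha z delta Ez -> mixed p ->
  exists x' xs : {ffun A -> R}, [/\ Ez x',
    (forall i, best_resp ordAf af0 (alpha i) z x' = best_resp ordAf af0 (alpha i) z p),
    \sum_a p a * g a <= \sum_a xs a * g a & l1dist x' xs <= delta].
Proof.
move=> d0 [Em HE] pm.
pose sigma i := best_resp ordAf af0 (alpha i) z p.
pose X := br_region ordAf af0 alpha z sigma.
have Xp : X p by split.
have [xs [ext ineq]] := @exists_ext R A X p g (fun x Xx => Xx.1) Xp.
have [H1 H2] := HE sigma (ex_intro _ p Xp) xs ext.
case: (pselect (X xs)) => Xxs.
  exists xs, xs; split => //; first exact: H1.
    by move=> i; exact: Xxs.2.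
  by rewrite /l1dist big1 // => a _; rewrite subrr normr0.
have [x' [Ex' [Xx' dx']]] := H2 Xxs.
by exists x', xs; split => // i; exact: Xx'.2.
Qed.

End Comb.

Lemma gen (R : realType) (A Af : finType) (ordAf : seq Af) (af0 : Af)
    (d K T : nat) (Z : 'rV[R]_d -> Prop)
    (alpha : 'I_K -> 'rV[R]_d -> A -> Af -> R)
    (delta : R) (E : 'rV[R]_d -> {ffun A -> R} -> Prop) :
  0 < delta -> delta <= (T%:R)^-1 ->
  (forall z, Z z -> approx_extreme ordAf af0 alpha z delta (E z)) ->
  forall (zs : 'I_T -> 'rV[R]_d) (pi : 'rV[R]_d -> {ffun A -> R}) (c : 'I_T -> A -> R),
  (forall t, Z (zs t)) -> (forall z, Z z -> mixed (pi z)) ->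
  (forall t a, 0 <= c t a <= 1) ->
  exists piE : 'rV[R]_d -> {ffun A -> R},
    [/\ (forall z, Z z -> E z (piE z)),
        (forall z, Z z -> forall i, best_resp ordAf af0 (alpha i) z (piE z)
                                   = best_resp ordAf af0 (alpha i) z (pi z)) &
        \sum_(t < T) (\sum_a pi (zs t) a * c t a - \sum_a piE (zs t) a * c t a) <= 1].
Proof.
move=> d0 dT HE zs pi c Zs pim cb.
pose Cz z a := \sum_(t | zs t == z) c t a.
have Hc z : exists q : {ffun A -> R} * {ffun A -> R}, Z z ->
    [/\ E z q.1,
    (forall i, best_resp ordAf af0 (alpha i) z q.1 = best_resp ordAf af0 (alpha i) z (pi z)),
    \sum_a pi z a * Cz z a <= \sum_a q.2 a * Cz z a & l1dist q.1 q.2 <= delta].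
  case: (pselect (Z z)) => Zz; last by exists (pi z, pi z).
  have [x' [xs H]] := @core R A Af _ ordAf af0 K alpha z delta (E z) (pi z) (Cz z)
     (ltW d0) (HE z Zz) (pim z Zz).
  by exists (x', xs).
pose F z := proj1_sig (cid (Hc z)).
have HF z : Z z -> _ := proj2_sig (cid (Hc z)).
exists (fun z => (F z).1); split.
- by move=> z Zz; have [] := HF z Zz.
- by move=> z Zz; have [] := HF z Zz.
pose xs z := (F z).2.
have -> : \sum_(t < T) (\sum_a pi (zs t) a * c t a - \sum_a (F (zs t)).1 a * c t a) =
   \sum_(t < T) (\sum_a (pi (zs t) a - xs (zs t) a) * c t a) +
   \sum_(t < T) (\sum_a (xs (zs t) a - (F (zs t)).1 a) * c t a).
  rewrite -big_split; apply: eq_bigr => t _ /=.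
  rewrite -big_split /= -sumrB; apply: eq_bigr => a _; ring.
rewrite -[1]add0r; apply: lerD.
  apply: (@group_sum _ _ _ zs) => s.
  have [_ _ Hs _] := HF (zs s) (Zs s).
  rewrite (eq_bigr (fun t => \sum_a (pi (zs s) a - xs (zs s) a) * c t a)); last first.
    by move=> t /eqP ->.
  rewrite exchange_big /=.
  rewrite (eq_bigr (fun a => (pi (zs s) a - xs (zs s) a) * Cz (zs s) a)); last first.
    by move=> a _; rewrite /Cz mulr_sumr.
  rewrite (eq_bigr (fun a => pi (zs s) a * Cz (zs s) a - xs (zs s) a * Cz (zs s) a)).
    by rewrite sumrB subr_le0.
  by move=> a _; rewrite mulrBl.
have step t : \sum_a (xs (zs t) a - (F (zs t)).1 a) * c t a <= delta.
  have [_ _ _ Hd] := HF (zs t) (Zs t).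
  apply: le_trans Hd; rewrite /l1dist; apply: ler_sum => a _.
  rewrite distrC; apply: le_trans (ler_norm _) _.
  rewrite normrM; have /andP[c0 c1] := cb t a.
  by rewrite ler_piMr // ger0_norm.
apply: (le_trans (y := \sum_(t < T) delta)); first by apply: ler_sum => t _; exact: step.
rewrite sumr_const card_ord.
rewrite -mulr_natl; case: (posnP T) => [T0|Tp]; first by rewrite T0 mul0r.
apply: le_trans (ler_wpM2l (ler0n _ _) dT) _.
by rewrite mulfV // pnatr_eq0 -lt0n.
Qed.

Theorem mainTheorem2 (R : realType) (A Af : finType) (ordAf : seq Af) (af0 : Af)
    (d K T : nat) (Z : 'rV[R]_d -> Prop)
    (u : 'rV[R]_d -> A -> Af -> R) (alpha : 'I_K -> 'rV[R]_d -> A -> Af -> R)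
    (delta : R) (E : 'rV[R]_d -> {ffun A -> R} -> Prop) :
  perm_eq ordAf (enum Af) ->
  (forall z a af, Z z -> 0 <= u z a af <= 1) ->
  (forall i z a af, Z z -> 0 <= alpha i z a af <= 1) ->
  0 < delta -> delta <= (T%:R)^-1 ->
  (forall z, Z z -> approx_extreme ordAf af0 alpha z delta (E z)) ->
  (forall (zs : 'I_T -> 'rV[R]_d) (f : 'I_T -> 'I_K) (pi : 'rV[R]_d -> {ffun A -> R}),
     (forall t, Z (zs t)) -> (forall z, Z z -> mixed (pi z)) ->
     exists piE : 'rV[R]_d -> {ffun A -> R},
       (forall z, Z z -> E z (piE z)) /\
       \sum_(t < T)
          (mutil u (zs t) (pi (zs t))
                 (best_resp ordAf af0 (alpha (f t)) (zs t) (pi (zs t)))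
           - mutil u (zs t) (piE (zs t))
                 (best_resp ordAf af0 (alpha (f t)) (zs t) (piE (zs t)))) <= 1)
  /\
  (forall (zs : 'I_T -> 'rV[R]_d) (p : 'I_K -> R) (pi : 'rV[R]_d -> {ffun A -> R}),
     (forall t, Z (zs t)) -> (forall i, 0 <= p i) -> \sum_(i < K) p i = 1 ->
     (forall z, Z z -> mixed (pi z)) ->
     exists piE : 'rV[R]_d -> {ffun A -> R},
       (forall z, Z z -> E z (piE z)) /\
       \sum_(t < T) \sum_(i < K)
          p i * (mutil u (zs t) (pi (zs t))
                   (best_resp ordAf af0 (alpha i) (zs t) (pi (zs t)))
                 - mutil u (zs t) (piE (zs t))
                   (best_resp ordAf af0 (alpha i) (zs t) (piE (zs t)))) <= 1).
Proof.
move=> _ ub _ d0 dT HE; split.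
- move=> zs f pi Zs pim.
  pose c t a := u (zs t) a (best_resp ordAf af0 (alpha (f t)) (zs t) (pi (zs t))).
  have cb t a : 0 <= c t a <= 1 by exact: ub.
  have [piE [H1 H2 H3]] := @gen R A Af ordAf af0 d K T Z alpha delta E d0 dT HE zs pi c Zs pim cb.
  exists piE; split => //.
  apply: le_trans H3; rewrite le_eqVlt; apply/orP; left; apply/eqP.
  apply: eq_bigr => t _; rewrite /mutil H2 //.
- move=> zs p pi Zs p0 p1 pim.
  pose c t a := \sum_(i < K) p i * u (zs t) a (best_resp ordAf af0 (alpha i) (zs t) (pi (zs t))).
  have cb t a : 0 <= c t a <= 1.
    apply/andP; split.
      by apply: sumr_ge0 => i _; apply: mulr_ge0 => //; have /andP[] := ub (zs t) a
        (best_resp ordAf af0 (alpha i) (zs t) (pi (zs t))) (Zs t).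
    rewrite -p1; apply: ler_sum => i _; apply: ler_piMr => //.
    by have /andP[] := ub (zs t) a (best_resp ordAf af0 (alpha i) (zs t) (pi (zs t))) (Zs t).
  have [piE [H1 H2 H3]] := @gen R A Af ordAf af0 d K T Z alpha delta E d0 dT HE zs pi c Zs pim cb.
  exists piE; split => //.
  apply: le_trans H3; rewrite le_eqVlt; apply/orP; left; apply/eqP.
  apply: eq_bigr => t _.
  under eq_bigr do rewrite /mutil H2 //.
  rewrite /c -sumrB; under [RHS]eq_bigr do rewrite -mulrBl mulr_sumr.
  rewrite exchange_big /=; apply: eq_bigr => i _.
  rewrite -sumrB mulr_sumr; apply: eq_bigr => a _; ring.
Qed.
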